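(* Let $\tilde\beta\subseteq\mathcal{N}$ satisfy, for each $c\in\mathcal{C}$, $|\tilde\beta\cap\mathcal{N}_c|=v_c+1$ if $|\mathcal{N}_c|>v_c$ and $|\tilde\beta\cap\mathcal{N}_c|=0$ otherwise. If $(B,\beta_1,\ldots,\beta_B)$ is a feasible solution of problem (RO-$\Sigma$), then for every $\sigma\in\Sigma$ at least one of the following holds: (i) there exist $b\in\{1,\ldots,B\}$ and $c\in\mathcal{C}$ with $|\{\sigma(j)\in\beta_b: j\in\mathcal{N}_c\}|>v_c$; (ii) $T^\sigma(\beta_1,\ldots,\beta_B,\tilde\beta)\neq T^*(\beta_1,\ldots,\beta_B,\tilde\beta)$.
   Context: A ballot style consists of contests $\mathcal{C}=\{1,\ldots,C\}$, candidates $\mathcal{N}=\{1,\ldots,N\}$ partitioned into nonempty sets $\mathcal{N}_c$ ($c\in\mathcal{C}$), and positive integers $v_c$. A filled-out ballot is a subset $\beta\subseteq\mathcal{N}$; $\mathscr{B}=\{\beta\subseteq\mathcal{N}: |\mathcal{N}_c\cap\beta|\le v_c\ \forall c\}$. For any deck of subsets and $i\in\mathcal{N}_c$: $T^*_i(\beta_1,\ldots,\beta_B)=\sum_{b=1}^B\mathbb{I}\{i\in\beta_b\text{ and }|\mathcal{N}_c\cap\beta_b|\le v_c\}$, and for a bijection $\sigma$ of $\mathcal{N}$, $T^\sigma_i(\beta_1,\ldots,\beta_B)=\sum_{b=1}^B\mathbb{I}\{\sigma(i)\in\beta_b\text{ and }|\{\sigma(j)\in\beta_b: j\in\mathcal{N}_c\}|\le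 v_c\}$. $\Sigma$ is the set of non-identity bijections $\mathcal{N}\to\mathcal{N}$. Problem (RO-$\Sigma$): minimize $B$ over $B\in\mathbb{N}$ and $\beta_1,\ldots,\beta_B\in\mathscr{B}$ subject to $T^\sigma(\beta_1,\ldots,\beta_B)\neq T^*(\beta_1,\ldots,\beta_B)$ for all $\sigma\in\Sigma$. *)

(* Defs.v *)
From mathcomp Require Import all_boot all_fingroup.
Set Implicit Arguments. Unset Strict Implicit. Unset Printing Implicit Defensive.

(* Ballot style: candidates 'I_N, contests 'I_C, [con i] = the contest of
   candidate i (so N_c = [set i | con i == c] is a partition of 'I_N),
   and [v c] = number of allowed votes in contest c. *)

Definition contest (N C : nat) (con : 'I_N -> 'I_C) (c : 'I_C) : {set 'I_N} :=
  [set i | con i == c].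

Definition valid_ballot (N C : nat) (con : 'I_N -> 'I_C) (v : 'I_C -> nat)
  (beta : {set 'I_N}) : bool :=
  [forall c, #|contest con c :&: beta| <= v c].

Definition Tstar (N C : nat) (con : 'I_N -> 'I_C) (v : 'I_C -> nat)
  (deck : seq {set 'I_N}) : {ffun 'I_N -> nat} :=
  [ffun i => count (fun beta : {set 'I_N} => (i \in beta) &&
                      (#|contest con (con i) :&: beta| <= v (con i))) deck].

Definition sigma_count (N C : nat) (con : 'I_N -> 'I_C) (sigma : {perm 'I_N})
  (beta : {set 'I_N}) (c : 'I_C) : nat :=
  #|[set j in contest con c | sigma j \in beta]|.

Definition Tsigma (N C : nat) (con : 'I_N -> 'I_C) (v : 'I_C -> nat)
  (sigma : {perm 'I_N}) (deck : seq {set 'I_N}) : {ffun 'I_N -> nat} :=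
  [ffun i => count (fun beta : {set 'I_N} => (sigma i \in beta) &&
                      (sigma_count con sigma beta (con i) <= v (con i))) deck].

(* (B, beta_1, ..., beta_B) is feasible for (RO-Sigma); B = size deck.
   Sigma = non-identity bijections of 'I_N = permutations sigma <> 1. *)
Definition RO_feasible (N C : nat) (con : 'I_N -> 'I_C) (v : 'I_C -> nat)
  (deck : seq {set 'I_N}) : Prop :=
  (forall beta, beta \in deck -> valid_ballot con v beta) /\
  (forall sigma : {perm 'I_N}, sigma != 1%g ->
     Tsigma con v sigma deck != Tstar con v deck).

(* Main.v *)
Require Import Defs.
From mathcomp Require Import all_boot all_fingroup.

Theorem proposition8 (N C : nat) (con : 'I_N -> 'I_C) (v : 'I_C -> nat)
  (Hnonempty : forall c : 'I_C, exists i : 'I_N, con i = c)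
  (Hvpos : forall c : 'I_C, 0 < v c)
  (btilde : {set 'I_N})
  (Hbtilde : forall c : 'I_C,
     #|btilde :&: contest con c| =
       (if v c < #|contest con c| then (v c).+1 else 0))
  (deck : seq {set 'I_N})
  (Hfeas : RO_feasible con v deck) :
  forall sigma : {perm 'I_N}, sigma != 1%g ->
    (exists2 beta, beta \in deck &
       exists c : 'I_C, v c < sigma_count con sigma beta c)
    \/ Tsigma con v sigma (rcons deck btilde) != Tstar con v (rcons deck btilde).
Proof.
move=> sigma Hs; case: Hfeas => Hval Hdiff.
case: (eqVneq (Tsigma con v sigma (rcons deck btilde)) (Tstar con v (rcons deck btilde))) => Heq; last by right.
case Hh: (has (fun beta => [exists c, v c < sigma_count con sigma beta c]) deck).
  left; case/hasP: Hh => beta Hb /existsP [c Hc]; exists beta => //; by exists c.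
exfalso.
have H0 : forall i, ((i \in btilde) && (#|contest con (con i) :&: btilde| <= v (con i))) = false.
  move=> i; apply/negbTE; apply/negP => /andP [Hi Hle].
  have : 0 < #|btilde :&: contest con (con i)|.
    apply/card_gt0P; exists i; by rewrite inE Hi /contest inE eqxx.
  rewrite Hbtilde; case: ifP => // Hc _.
  by move: Hle; rewrite setIC Hbtilde Hc ltnn.
pose f i := count (fun beta : {set 'I_N} => i \in beta) deck.
have Hstar : forall i, Tstar con v deck i = f i.
  move=> i; rewrite ffunE; apply: eq_in_count => beta Hb /=.
  have := Hval beta Hb => /forallP /(_ (con i)) ->; by rewrite andbT.
have Hsig : forall i, Tsigma con v sigma deck i = f (sigma i).
  move=> i; rewrite ffunE; apply: eq_in_count => beta Hb /=.
  have : ~~ [exists c, v c < sigma_count con sigma beta c].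
    apply/negP => Hex; move/negbT: Hh => /hasPn /(_ beta Hb); by rewrite Hex.
  rewrite negb_exists => /forallP /(_ (con i)); rewrite -leqNgt => ->; by rewrite andbT.
have Hle : forall i, f (sigma i) <= f i.
  move=> i; have := congr1 (fun g : {ffun 'I_N -> nat} => g i) Heq.
  rewrite /= !ffunE -!cats1 !count_cat /= H0 => E.
  have E2 : Tsigma con v sigma deck i + ((sigma i \in btilde) && (sigma_count con sigma btilde (con i) <= v (con i)))
            = Tstar con v deck i.
  by move: E; rewrite !ffunE !addn0.
  rewrite -(Hstar i) -E2 -(Hsig i); exact: leq_addr.
apply: (negP (Hdiff sigma Hs)); apply/eqP/ffunP => i; rewrite Hstar Hsig.
apply/eqP; rewrite eqn_leq Hle /=; rewrite leqNgt; apply/negP => Hlt.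
have Hsum : \sum_j f (sigma j) = \sum_j f j.
  by rewrite [RHS](reindex_inj (@perm_inj _ sigma)).
move: Hsum; rewrite (bigD1 i) //= [in RHS](bigD1 i) //= => E.
have : f (sigma i) + \sum_(j | j != i) f (sigma j) < f i + \sum_(j | j != i) f j.
  rewrite -addSn; apply: leq_add => //; apply: leq_sum => j _; exact: Hle.
by rewrite E ltnn.
Qed.
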